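(* For every $k$-uniform hypergraph $H=(V,E)$ on $n$ vertices, $\mathrm{mms}(H)=\mu(H)$.
   Context: For $w:V\to\mathbb R$ and $X\subseteq V$ write $w(X)=\sum_{x\in X}w(x)$. Define $\mathrm{mms}(H)=\min\{|\{e\in E: w(e)\ge 0\}| : w:V\to\mathbb R,\ w(V)\ge 0\}$. A fractional cover of a hypergraph $(V,F)$ is a function $f:V\to[0,\infty)$ with $f(e)\ge 1$ for every $e\in F$; $\tau^*$ is the minimum of $f(V)$ over fractional covers, and $\nu^*$ is the fractional matching number (which equals $\tau^*$ by LP duality). For $E'\subseteq E$ let $H-E'=(V,E\setminus E')$. Define $\mu(H)=\min\{|E'|: E'\subseteq E,\ \nu^*(H-E')=\tau^*(H-E')<n/k\}$. *)

(* Defs.v *)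
From mathcomp Require Import all_boot all_order all_algebra.
From mathcomp Require Import reals.
Set Implicit Arguments. Unset Strict Implicit. Unset Printing Implicit Defensive.
Import Order.TTheory GRing.Theory Num.Theory.
Local Open Scope ring_scope.

Section Hyp.
Variables (R : realType) (V : finType).

Definition wsum (w : V -> R) (X : {set V}) : R := \sum_(x in X) w x.

Definition nonneg_edges (E : {set {set V}}) (w : V -> R) : nat :=
  #|[set e in E | 0 <= wsum w e]|.

Definition is_mms (E : {set {set V}}) (m : nat) : Prop :=
  (exists w : V -> R, 0 <= wsum w setT /\ nonneg_edges E w = m) /\
  (forall w : V -> R, 0 <= wsum w setT -> (m <= nonneg_edges E w)%N).

Definition frac_cover (F : {set {set V}}) (f : V -> R) : Prop :=
  (forall x, 0 <= f x) /\ (forall e, e \in F -> 1 <= wsum f e).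

Definition is_tau_star (F : {set {set V}}) (t : R) : Prop :=
  (exists f, frac_cover F f /\ wsum f setT = t) /\
  (forall f, frac_cover F f -> t <= wsum f setT).

Definition frac_matching (F : {set {set V}}) (g : {set V} -> R) : Prop :=
  (forall e, e \in F -> 0 <= g e) /\
  (forall x, \sum_(e in F | x \in e) g e <= 1).

Definition is_nu_star (F : {set {set V}}) (t : R) : Prop :=
  (exists g, frac_matching F g /\ \sum_(e in F) g e = t) /\
  (forall g, frac_matching F g -> \sum_(e in F) g e <= t).

Definition mu_cond (n k : nat) (F : {set {set V}}) : Prop :=
  exists t, is_nu_star F t /\ is_tau_star F t /\ t < n%:R / k%:R.

Definition is_mu (n k : nat) (E : {set {set V}}) (m : nat) : Prop :=
  (exists E' : {set {set V}}, E' \subset E /\ #|E'| = m /\ mu_cond n k (E :\: E')) /\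
  (forall E' : {set {set V}}, E' \subset E -> mu_cond n k (E :\: E') -> (m <= #|E'|)%N).

End Hyp.

(* Main.v *)
Require Import Defs.
From mathcomp Require Import all_boot all_order all_algebra.
From mathcomp Require Import reals.
From mathcomp Require Import all_boot all_order all_algebra.
From mathcomp Require Import reals ring lra.
Set Implicit Arguments. Unset Strict Implicit. Unset Printing Implicit Defensive.
Import Order.TTheory GRing.Theory Num.Theory.
Local Open Scope ring_scope.

Section FM.
Variables (R : realFieldType) (X : finType).
Definition cstr := ({ffun X -> R} * R)%type.
Definition dot (a : {ffun X -> R}) (x : X -> R) : R := \sum_i a i * x i.
Definition sat (s : seq cstr) (x : X -> R) := forall c, c \in s -> dot c.1 x <= c.2.
Definition cadd (c1 c2 : cstr) : cstr := ([ffun i => c1.1 i + c2.1 i], c1.2 + c2.2).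
Definition cscale (l : R) (c : cstr) : cstr := ([ffun i => l * c.1 i], l * c.2).
Definition czero : {ffun X -> R} := [ffun _ => 0].

Inductive deriv (s : seq cstr) : cstr -> Prop :=
| D_mem c : c \in s -> deriv s c
| D_add c1 c2 : deriv s c1 -> deriv s c2 -> deriv s (cadd c1 c2)
| D_scale l c : 0 <= l -> deriv s c -> deriv s (cscale l c)
| D_weak a b b' : deriv s (a, b) -> b <= b' -> deriv s (a, b').

Lemma deriv_trans s s' c : deriv s' c -> (forall c', c' \in s' -> deriv s c') -> deriv s c.
Proof.
move=> d H; elim: d => {c}.
- by move=> c cs; exact: H.
- by move=> c1 c2 _ h1 _ h2; apply: D_add.
- by move=> l c hl _ h; apply: D_scale.
- by move=> a b b' _ h hb; apply: D_weak h hb.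
Qed.

Lemma dotD (a b : {ffun X -> R}) x : dot [ffun i => a i + b i] x = dot a x + dot b x.
Proof. by rewrite /dot -big_split; apply: eq_bigr => i _; rewrite ffunE mulrDl. Qed.

Lemma dotZ l (a : {ffun X -> R}) x : dot [ffun i => l * a i] x = l * dot a x.
Proof. by rewrite /dot mulr_sumr; apply: eq_bigr => i _; rewrite ffunE mulrA. Qed.

Lemma sep_exists (L U : seq R) : (forall l u, l \in L -> u \in U -> l <= u) ->
  exists t, (forall l, l \in L -> l <= t) /\ (forall u, u \in U -> t <= u).
Proof.
elim: L => [|l L IH] H.
- elim: U {H} => [|u U [t [_ Ht]]]; first by exists 0.
  exists (Num.min t u); split => // v; rewrite inE => /orP [/eqP ->|vU].
  + by rewrite ge_min lexx orbT.
  + by rewrite ge_min Ht.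
- have [|t [tL tU]] := IH.
    by move=> l' u lL uU; apply: H => //; rewrite inE lL orbT.
  exists (Num.max t l); split.
  + move=> v; rewrite inE => /orP [/eqP ->|vL]; first by rewrite le_max lexx orbT.
    by rewrite le_max tL.
  + by move=> u uU; rewrite ge_max tU //= H // inE eqxx.
Qed.

Lemma fm n : forall (S : {set X}) (s : seq cstr), #|S| = n ->
  (forall c j, c \in s -> j \notin S -> c.1 j = 0) ->
  (exists x, sat s x) \/ (exists b, b < 0 /\ deriv s (czero, b)).
Proof.
elim: n => [|n IH] S s hS hsup.
- case: (boolP (all (fun c : cstr => 0 <= c.2) s)) => [/allP hall | /allPn [c cs hc]].
  + left; exists (fun _ => 0); move=> c cs; rewrite /dot big1 ?hall // => i _; by rewrite mulr0.
  + right; exists (c.2); split.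
    by rewrite ltNge.
    have -> : czero = c.1.
      apply/ffunP => i; rewrite ffunE hsup //.
      by rewrite (cards0_eq hS) in_set0.
    by rewrite -surjective_pairing; apply: D_mem.
- have [j jS] : exists j, j \in S by apply/set0Pn; rewrite -card_gt0 hS.
  set S' := S :\ j.
  have hS' : #|S'| = n by move: (cardsD1 j S); rewrite jS hS add1n => -[].
  set Z := [seq c : cstr <- s | c.1 j == 0].
  set P := [seq c : cstr <- s | 0 < c.1 j].
  set N := [seq c : cstr <- s | c.1 j < 0].
  have memZ c : (c \in Z) = (c.1 j == 0) && (c \in s) by rewrite mem_filter.
  have memP c : (c \in P) = (0 < c.1 j) && (c \in s) by rewrite mem_filter.
  have memN c : (c \in N) = (c.1 j < 0) && (c \in s) by rewrite mem_filter.
  pose comb (p q : cstr) := cadd (cscale (- q.1 j) p) (cscale (p.1 j) q).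
  set s' := Z ++ [seq comb p q | p <- P, q <- N].
  have sup' : forall c i, c \in s' -> i \notin S' -> c.1 i = 0.
    move=> c i; rewrite mem_cat => /orP [cZ|/allpairsP [[p q] [pP qN ->]]] hi.
    + move: cZ; rewrite memZ => /andP [/eqP cj cs].
      case: (i =P j) => [->//|/eqP ij]; apply: hsup cs _.
      by move: hi; rewrite in_setD1 ij.
    + move: pP qN; rewrite memP memN => /andP [_ ps] /andP [_ qs] /=.
      rewrite !ffunE /=.
      case: (i =P j) => [->|/eqP ij]; first by ring.
      have iS : i \notin S by move: hi; rewrite in_setD1 ij.
      by rewrite (hsup p i) // (hsup q i) // !mulr0 addr0.
  case: (IH S' s' hS' sup') => [[x' hx'] | [b [bneg db]]]; last first.
  + right; exists b; split => //; apply: deriv_trans db _ => c.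
    rewrite mem_cat => /orP [|/allpairsP [[p q] [pP qN ->]]].
    * by rewrite memZ => /andP [_ cs]; apply: D_mem.
    * move: pP qN; rewrite memP memN => /andP [pj ps] /andP [qj qs] /=.
      apply: D_add; apply: D_scale; try (by apply: D_mem).
      - by rewrite oppr_ge0 ltW.
      - by rewrite ltW.
  + left.
    pose sl (c : cstr) := c.2 - dot c.1 x'.
    have key : forall p q, p \in P -> q \in N -> sl q / q.1 j <= sl p / p.1 j.
      move=> p q pP qN.
      have mem : comb p q \in s' by rewrite mem_cat; apply/orP; right; apply: allpairs_f.
      have := hx' _ mem.
      rewrite /comb /cadd /cscale /= dotD !dotZ => h.
      move: pP qN; rewrite memP memN => /andP [pj _] /andP [qj _].
      rewrite ler_pdivlMr // mulrAC ler_ndivrMr //.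
      rewrite /sl; nra.
    have [t [tL tU]] : exists t, (forall l, l \in [seq sl q / q.1 j | q <- N] -> l <= t) /\
        (forall u, u \in [seq sl p / p.1 j | p <- P] -> t <= u).
      apply: sep_exists => l u /mapP [q qN ->] /mapP [p pP ->]; exact: key.
    exists (fun i => if i == j then x' j + t else x' i) => c cs.
    have dx : dot c.1 (fun i => if i == j then x' j + t else x' i) = dot c.1 x' + c.1 j * t.
      rewrite /dot (bigD1 j) // [in RHS](bigD1 j) //= eqxx mulrDr -!addrA; congr (_ + _).
      rewrite addrC; congr (_ + _); apply: eq_bigr => i /negbTE -> //.
    rewrite dx; case: (ltrgtP (c.1 j) 0) => hc.
    * have cN : c \in N by rewrite memN hc.
      have := tL _ (map_f (fun q => sl q / q.1 j) cN).
      rewrite ler_ndivrMr // /sl => h; rewrite mulrC; lra.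
    * have cP : c \in P by rewrite memP hc.
      have := tU _ (map_f (fun q => sl q / q.1 j) cP).
      rewrite ler_pdivlMr // /sl => h; rewrite mulrC; lra.
    * have cZ : c \in s' by rewrite mem_cat memZ hc eqxx cs.
      by rewrite hc mul0r addr0; apply: hx'.
Qed.

Lemma farkas (s : seq cstr) :
  (exists x, sat s x) \/ (exists b, b < 0 /\ deriv s (czero, b)).
Proof. by apply: (@fm #|[set: X]| setT) => // c j _; rewrite in_setT. Qed.

End FM.

Section Hyper.
Variables (R : realType) (V : finType) (F : {set {set V}}).
Local Notation X := (V + {set V})%type.
Local Notation cs := (cstr R X).

Lemma wsumT (w : V -> R) : wsum w setT = \sum_v w v.
Proof. by apply: eq_bigl => v; rewrite in_setT. Qed.

Lemma sum_if_mul (T : finType) (P : pred T) (c : R) (h : T -> R) :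
  \sum_i (if P i then c else 0) * h i = c * \sum_(i | P i) h i.
Proof.
rewrite [in RHS]big_mkcond mulr_sumr; apply: eq_bigr => i _.
by case: ifP; rewrite ?mul0r ?mulr0.
Qed.

Lemma sum0mul (T : finType) (h : T -> R) : \sum_i 0 * h i = 0.
Proof. by rewrite big1 // => i _; rewrite mul0r. Qed.

Lemma DC (al : {set V} -> R) (ga : V -> R) :
  \sum_(e in F) al e * (\sum_(v in e) ga v) = \sum_v ga v * (\sum_(e in F | v \in e) al e).
Proof.
rewrite [RHS](eq_bigr (fun v => \sum_(e in F) (if v \in e then al e * ga v else 0))); last first.
  move=> v _; rewrite big_mkcondr mulr_sumr; apply: eq_bigr => e _.
  by case: ifP; rewrite ?mulr0 // mulrC.
rewrite exchange_big; apply: eq_bigr => e _; rewrite big_mkcond mulr_sumr.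
by apply: eq_bigr => v _; case: ifP; rewrite ?mulr0.
Qed.

Lemma dot_split (a : {ffun X -> R}) (x : X -> R) :
  dot a x = \sum_v a (inl v) * x (inl v) + \sum_e a (inr e) * x (inr e).
Proof. by rewrite /dot big_sumType. Qed.

Definition c1 (e0 : {set V}) : cs :=
  ([ffun i => match i with inl x => if x \in e0 then -1 else 0 | inr _ => 0 end], -1).
Definition c2 (x0 : V) : cs :=
  ([ffun i => match i with inl x => if x == x0 then -1 else 0 | inr _ => 0 end], 0).
Definition c3 (x0 : V) : cs :=
  ([ffun i => match i with inl _ => 0 | inr e => if (e \in F) && (x0 \in e) then 1 else 0 end], 1).
Definition c4 (e0 : {set V}) : cs :=
  ([ffun i => match i with inl _ => 0 | inr e => if e == e0 then -1 else 0 end], 0).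
Definition c5 : cs :=
  ([ffun i => match i with inl _ => 1 | inr e => if e \in F then -1 else 0 end], 0).

Definition sys : seq cs :=
  [seq c1 e | e <- enum F] ++ [seq c2 x | x <- enum V] ++ [seq c3 x | x <- enum V]
  ++ [seq c4 e | e <- enum F] ++ [:: c5].

Definition Inv (c : cs) : Prop :=
  exists (al : {set V} -> R) (ga : V -> R) (la : R),
    [/\ (forall e, 0 <= al e), (forall v, 0 <= ga v), 0 <= la,
     (forall v, c.1 (inl v) <= la - \sum_(e in F | v \in e) al e) &
     (forall e, e \in F -> c.1 (inr e) <= \sum_(v in e) ga v - la) /\
     \sum_v ga v - \sum_(e in F) al e <= c.2].

Lemma sum_ind (T : finType) (P : pred T) (t0 : T) :
  \sum_(t | P t) (if t == t0 then (1:R) else 0) = if P t0 then 1 else 0.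
Proof.
rewrite big_mkcond (bigD1 t0) //= eqxx big1 ?addr0 // => t /negbTE ->.
by case: ifP.
Qed.

Lemma Inv_mem c : c \in sys -> Inv c.
Proof.
rewrite !mem_cat mem_seq1 => /orP [|/orP [|/orP [|/orP [|/eqP ->]]]].
- move=> /mapP [e0 + ->]; rewrite mem_enum => e0F.
  exists (fun e => if e == e0 then 1 else 0), (fun _ => 0), 0; (do !split) => //=.
  + by move=> e; case: ifP.
  + move=> v; rewrite ffunE (sum_ind (fun e => (e \in F) && (v \in e))) /= e0F /=.
    by case: ifP => _; lra.
  + by move=> e _; rewrite ffunE big1_eq subr0.
  + by rewrite big1_eq (sum_ind (fun e => e \in F)) e0F sub0r.
- move=> /mapP [x0 _ ->].
  exists (fun _ => 0), (fun _ => 0), 0; (do !split) => //=.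
  + by move=> v; rewrite ffunE big1_eq subr0; case: ifP; rewrite ?lerN10.
  + by move=> e _; rewrite ffunE big1_eq subr0.
  + by rewrite !big1_eq subr0.
- move=> /mapP [x0 _ ->].
  exists (fun _ => 0), (fun v => if v == x0 then 1 else 0), 0; (do !split) => //=.
  + by move=> v; case: ifP.
  + by move=> v; rewrite ffunE big1_eq subr0.
  + move=> e eF; rewrite ffunE (sum_ind (fun v => v \in e)) eF subr0 /=.
    by case: ifP.
  + by rewrite big1_eq subr0 (sum_ind xpredT).
- move=> /mapP [e0 _ ->].
  exists (fun _ => 0), (fun _ => 0), 0; (do !split) => //=.
  + by move=> v; rewrite ffunE big1_eq subr0.
  + by move=> e _; rewrite ffunE big1_eq subr0; case: ifP; rewrite ?lerN10.
  + by rewrite !big1_eq subr0.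
- exists (fun _ => 0), (fun _ => 0), 1; (do !split) => //=.
  + by move=> v; rewrite ffunE big1_eq subr0.
  + by move=> e eF; rewrite ffunE big1_eq eF sub0r.
  + by rewrite !big1_eq subr0.
Qed.

Lemma Inv_deriv c : deriv sys c -> Inv c.
Proof.
elim => {c}.
- exact: Inv_mem.
- move=> c1 c2 _ [a1 [g1 [l1 [ha1 hg1 hl1 hi1 [hr1 hb1]]]]] _ [a2 [g2 [l2 [ha2 hg2 hl2 hi2 [hr2 hb2]]]]].
  exists (fun e => a1 e + a2 e), (fun v => g1 v + g2 v), (l1 + l2); (do !split) => /=.
  + by move=> e; rewrite addr_ge0.
  + by move=> v; rewrite addr_ge0.
  + by rewrite addr_ge0.
  + move=> v; rewrite ffunE big_split /=; have := hi1 v; have := hi2 v; lra.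
  + move=> e eF; rewrite ffunE big_split /=; have := hr1 e eF; have := hr2 e eF; lra.
  + rewrite !big_split /=; lra.
- move=> l c hl _ [a1 [g1 [l1 [ha1 hg1 hl1 hi1 [hr1 hb1]]]]].
  exists (fun e => l * a1 e), (fun v => l * g1 v), (l * l1); (do !split) => /=.
  + by move=> e; rewrite mulr_ge0.
  + by move=> v; rewrite mulr_ge0.
  + by rewrite mulr_ge0.
  + move=> v; rewrite ffunE -mulr_sumr -mulrBr; apply: ler_wpM2l => //; exact: hi1.
  + move=> e eF; rewrite ffunE -mulr_sumr -mulrBr; apply: ler_wpM2l => //; exact: hr1.
  + by rewrite -!mulr_sumr -mulrBr; apply: ler_wpM2l.
- move=> a b b' _ [a1 [g1 [l1 [ha1 hg1 hl1 hi1 [hr1 hb1]]]]] hb.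
  by exists a1, g1, l1; (do !split) => //=; move: hb1 => /=; lra.
Qed.

Lemma Inv_false b : (forall e, e \in F -> (0 < #|e|)%N) -> b < 0 -> Inv (czero R X, b) -> False.
Proof.
move=> hF bneg [al [ga [la [hal hga hla hi [hr hb]]]]]; move: hb => /= hb.
have hi' : forall v, \sum_(e in F | v \in e) al e <= la.
  by move=> v; have := hi v; rewrite ffunE; lra.
have hr' : forall e, e \in F -> la <= \sum_(v in e) ga v.
  by move=> e eF; have := hr e eF; rewrite ffunE; lra.
have stepA : la * \sum_(e in F) al e <= la * \sum_v ga v.
  apply: (@le_trans _ _ (\sum_(e in F) al e * (\sum_(v in e) ga v))).
    rewrite mulr_sumr; apply: ler_sum => e eF; rewrite mulrC; apply: ler_wpM2l => //; exact: hr'.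
  rewrite DC mulr_sumr; apply: ler_sum => v _; rewrite [la * _]mulrC; apply: ler_wpM2l => //; exact: hi'.
have stepB : \sum_(e in F) al e <= \sum_v (\sum_(e in F | v \in e) al e).
  apply: (@le_trans _ _ (\sum_(e in F) al e * (\sum_(v in e) (1:R)))).
    apply: ler_sum => e eF; apply: ler_peMr => //.
    by rewrite sumr_const ler1n hF.
  by rewrite DC; apply: ler_sum => v _; rewrite mul1r.
have hsg : 0 <= \sum_v ga v by apply: sumr_ge0.
have hla0 : la <= 0.
  by rewrite leNgt; apply/negP => lap; move: stepA; rewrite ler_pM2l // => h; lra.
have : \sum_v (\sum_(e in F | v \in e) al e) <= 0.
  by apply: sumr_le0 => v _; apply: le_trans (hi' v) hla0.
lra.
Qed.

Lemma weak_dual (f : V -> R) (g : {set V} -> R) :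
  frac_cover F f -> frac_matching F g -> \sum_(e in F) g e <= wsum f setT.
Proof.
move=> [hf0 hf1] [hg0 hg1].
apply: (@le_trans _ _ (\sum_(e in F) g e * wsum f e)).
  by apply: ler_sum => e eF; apply: ler_peMr; [exact: hg0|exact: hf1].
rewrite /wsum (DC g f) -/(wsum f setT) wsumT; apply: ler_sum => v _.
by rewrite -[leRHS]mulr1; apply: ler_wpM2l.
Qed.

Lemma dot_ffun (h : X -> R) (x : X -> R) :
  dot [ffun i => h i] x = \sum_v h (inl v) * x (inl v) + \sum_e h (inr e) * x (inr e).
Proof. by rewrite dot_split; congr (_ + _); apply: eq_bigr => ? _; rewrite ffunE. Qed.

Lemma duality : (forall e, e \in F -> (0 < #|e|)%N) ->
  exists t : R, is_nu_star F t /\ is_tau_star F t.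
Proof.
move=> hF; case: (farkas sys) => [[x hx] | [b [bneg d]]]; last first.
  by case: (Inv_false hF bneg (Inv_deriv d)).
pose f := fun v => x (inl v); pose g := fun e => x (inr e).
have m1 e : e \in F -> c1 e \in sys by move=> eF; rewrite /sys !mem_cat map_f ?mem_enum.
have m2 v : c2 v \in sys by rewrite /sys !mem_cat map_f ?orbT ?mem_enum.
have m3 v : c3 v \in sys.
  by rewrite /sys !mem_cat; apply/orP; right; apply/orP; right; apply/orP; left; apply: map_f; rewrite mem_enum.
have m4 e : e \in F -> c4 e \in sys.
  by move=> eF; rewrite /sys !mem_cat; apply/orP; right; apply/orP; right; apply/orP; right; apply/orP; left; apply: map_f; rewrite mem_enum.
have m5 : c5 \in sys by rewrite /sys !mem_cat mem_seq1 eqxx !orbT.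
have hc : frac_cover F f.
  split.
  - move=> v; have := hx _ (m2 v); rewrite dot_ffun /= sum_if_mul sum0mul big_pred1_eq /f; lra.
  - move=> e eF; have := hx _ (m1 e eF); rewrite dot_ffun /= sum_if_mul sum0mul /wsum /f; lra.
have hg : frac_matching F g.
  split.
  - move=> e eF; have := hx _ (m4 e eF); rewrite dot_ffun /= sum_if_mul sum0mul big_pred1_eq /g; lra.
  - move=> v; have := hx _ (m3 v); rewrite dot_ffun /= sum_if_mul sum0mul /g; lra.
have h5 : wsum f setT <= \sum_(e in F) g e.
  have := hx _ m5; rewrite dot_ffun /= sum_if_mul wsumT.
  have -> : \sum_v 1 * x (inl v) = \sum_v f v by apply: eq_bigr => v _; rewrite mul1r.
  rewrite /g; lra.
have hw := weak_dual hc hg.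
exists (wsum f setT); split; split.
- by exists g; split => //; apply/eqP; rewrite eq_le hw h5.
- by move=> g' hg'; apply: weak_dual.
- by exists f.
- by move=> f' hf'; apply: le_trans h5 (weak_dual hf' hg).
Qed.

End Hyper.

Lemma mu_iff (R : realType) (V : finType) (n k : nat) (F : {set {set V}}) :
  (0 < k)%N -> (0 < n)%N -> #|V| = n -> (forall e, e \in F -> #|e| = k) ->
  mu_cond R n k F <-> exists w : V -> R, 0 <= wsum w setT /\ forall e, e \in F -> wsum w e < 0.
Proof.
move=> k0 n0 hV hk.
have n0' : (0 : R) < n%:R by rewrite ltr0n.
have kp : (0 : R) < k%:R by rewrite ltr0n.
split.
- move=> [t [_ [[[f [[hf0 hf1] hft]] _] ht]]].
  pose c := wsum f setT / n%:R.
  have hc : c * n%:R = wsum f setT by rewrite /c divfK // gt_eqF.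
  exists (fun v => c - f v); split.
  + rewrite /wsum sumrB sumr_const cardsT hV -mulr_natr -/(wsum f setT) hc subrr //.
  + move=> e eF; rewrite /wsum sumrB sumr_const hk // -mulr_natr.
    have := hf1 e eF; rewrite /wsum => h1.
    have : c * k%:R < 1.
      by rewrite /c mulrAC ltr_pdivrMr // mul1r hft -ltr_pdivlMr.
    lra.
- move=> [w [hwV hwe]].
  have hF : forall e, e \in F -> (0 < #|e|)%N by move=> e eF; rewrite hk.
  have [t [hnu htau]] := duality R hF.
  exists t; split => //; split => //.
  rewrite ltNge; apply/negP => ht.
  case: hnu => [[g [[hg0 hg1] hgt]] _].
  have tpos : 0 < t by apply: lt_le_trans ht; rewrite divr_gt0.
  have sumd : \sum_v (\sum_(e in F | v \in e) g e) = k%:R * t.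
    have E1 : \sum_(e in F) g e * (\sum_(v in e) (1:R)) = k%:R * t.
      by rewrite -hgt mulr_sumr; apply: eq_bigr => e eF; rewrite sumr_const hk // mulrC.
    by rewrite -E1 DC; apply: eq_bigr => v _; rewrite mul1r.
  have d1 : forall v, \sum_(e in F | v \in e) g e = 1.
    have hs : \sum_v (1 - \sum_(e in F | v \in e) g e) = 0.
      apply/eqP; rewrite eq_le; apply/andP; split.
        rewrite sumrB sumd sumr_const hV.
        by move: ht; rewrite ler_pdivrMr // mulrC subr_le0.
      by apply: sumr_ge0 => v _; rewrite subr_ge0.
    have hnn : forall i : V, true -> 0 <= 1 - \sum_(e in F | i \in e) g e.
      by move=> i _; rewrite subr_ge0.
    by move=> v; have := @psumr_eq0P _ _ _ _ hnn hs v isT; lra.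
  have E2 : \sum_(e in F) g e * wsum w e = wsum w setT.
    by rewrite wsumT /wsum DC; apply: eq_bigr => v _; rewrite d1 mulr1.
  have [e0 e0F ge0] : exists2 e0, e0 \in F & 0 < g e0.
    case: (pickP (fun e => (e \in F) && (0 < g e))) => [e0 /andP [e0F h] | hn]; first by exists e0.
    have : \sum_(e in F) g e <= 0.
      by apply: sumr_le0 => e eF; have := hn e; rewrite eF /= => /negbT; rewrite -leNgt.
    lra.
  have : \sum_(e in F) g e * wsum w e < 0.
    rewrite (bigD1 e0) //=.
    have : g e0 * wsum w e0 < 0 by rewrite pmulr_rlt0 // hwe.
    have : \sum_(e in F | e != e0) g e * wsum w e <= 0.
      by apply: sumr_le0 => e /andP [eF _]; apply: mulr_ge0_le0; [exact: hg0 | exact: ltW (hwe e eF)].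
    lra.
  rewrite E2; lra.
Qed.

Theorem theorem1 (R : realType) (k n : nat) (V : finType) (E : {set {set V}}) :
  (0 < k)%N -> (0 < n)%N -> #|V| = n ->
  (forall e, e \in E -> #|e| = k) ->
  forall m : nat, is_mms R E m <-> is_mu R n k E m.
Proof.
move=> k0 n0 hV hk m.
have hkD : forall E' : {set {set V}}, forall e, e \in E :\: E' -> #|e| = k.
  by move=> E' e; rewrite in_setD => /andP [_ eE]; apply: hk.
have A : forall w : V -> R, 0 <= wsum w setT -> exists E' : {set {set V}},
    [/\ E' \subset E, #|E'| = nonneg_edges E w & mu_cond R n k (E :\: E')].
  move=> w hw; exists [set e in E | 0 <= wsum w e]; split => //.
    by apply/subsetP => e; rewrite inE => /andP [].
  apply/(@mu_iff R V n k _ k0 n0 hV (hkD _)); exists w; split => // e.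
  rewrite !inE => /andP [h eE]; move: h; rewrite eE /= -ltNge //.
have B : forall E' : {set {set V}}, E' \subset E -> mu_cond R n k (E :\: E') ->
    exists w : V -> R, 0 <= wsum w setT /\ (nonneg_edges E w <= #|E'|)%N.
  move=> E' sE /(@mu_iff R V n k _ k0 n0 hV (hkD _)) [w [hw he]]; exists w; split => //.
  apply: subset_leq_card; apply/subsetP => e; rewrite inE => /andP [eE hn].
  case: (boolP (e \in E')) => // nE'.
  by have := he e; rewrite in_setD nE' eE => /(_ isT); rewrite ltNge hn.
split.
- move=> [[w [hw hwm]] hmin]; split.
  + by have [E' [sE cE hmu]] := A w hw; exists E'; rewrite cE hwm.
  + move=> E' sE hmu; have [w' [hw' hle]] := B E' sE hmu.
    exact: leq_trans (hmin w' hw') hle.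
- move=> [[E' [sE [cE hmu]]] hmin]; have [w [hw hle]] := B E' sE hmu; split.
  + exists w; split => //; apply/eqP; rewrite eqn_leq -cE hle /=.
    by have [E'' [sE'' cE'' hmu'']] := A w hw; rewrite -cE'' cE; apply: hmin.
  + by move=> w' hw'; have [E'' [s c h]] := A w' hw'; rewrite -c; apply: hmin.
Qed.
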